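(* Let $F$ and $G$ be finite graphs, let $n=v(G)$, and let $W_G$ be a graphon representation of $G$. Then $\mathsf{fcov}(F,G)=n\cdot\mathsf{fcov}(F,W_G)$.
   Context: $(\Omega,\nu)$ is an atomless Borel probability space; a graphon is a symmetric measurable $W:\Omega^2\to[0,1]$. Let $F$ have vertex set $[k]$. For a finite graph $G$, $\mathcal{F}_F(G)=\{(u_1,\dots,u_k)\in V(G)^k:u_iu_j\in E(G)\text{ for each }ij\in E(F)\}$. A fractional $F$-cover of $G$ is $\mathfrak{c}:V(G)\to[0,1]$ with $\sum_{i=1}^k\mathfrak{c}(u_i)\ge1$ for each $(u_1,\dots,u_k)\in\mathcal{F}_F(G)$; its size is $\sum_v\mathfrak{c}(v)$, and $\mathsf{fcov}(F,G)$ is the minimum size. A graphon representation $W_G$ of $G$ with $V(G)=\{v_1,\dots,v_n\}$: partition $\Omega$ into measurable sets $\Omega_1,\dots,\Omega_n$ of measure $1/n$ and let $W_G=1$ on $\Omega_i\times\Omega_j$ if $v_iv_j\in E(G)$, $0$ otherwise. For a graphon $W$, $W^{\otimes F}(x_1,\dots,x_k)=\prod_{ij\in E(F),i<j}W(x_i,x_j)$ and $\mathcal{F}_F(W)=\{W^{\otimes F}\neq0\}$. A fractional $F$-cover of $W$ is a measurable $\mathfrak{c}:\Omega\to[0,1]$ with $\nu^k\big(\mathcal{F}_F(W)\cap\{(x_1,\dots,x_k):\sum_{i=1}^k\mathfrak{c}(x_i)<1\}\big)=0$; its size is $\int\mathfrak{c}\,\mathrm{d}\nu$, and $\mathsf{fcov}(F,W)$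 is the infimum of sizes. *)

(* Defs.v *)
From HB Require Import structures.
From mathcomp Require Import all_boot all_order all_algebra.
From mathcomp Require Import all_classical all_reals all_analysis.
Set Implicit Arguments. Unset Strict Implicit. Unset Printing Implicit Defensive.
Import Order.TTheory GRing.Theory Num.Theory.
Local Open Scope classical_set_scope.
Local Open Scope ring_scope.

Definition simple_graph (V : finType) (e : rel V) : Prop :=
  (forall u v, e u v = e v u) /\ (forall v, ~~ e v v).

Section Defs.
Variable R : realType.

Definition FF_G (k : nat) (eF : rel 'I_k) (V : finType) (eG : rel V)
  (u : 'I_k -> V) : Prop := forall i j, eF i j -> eG (u i) (u j).

Definition is_fcov_G (k : nat) (eF : rel 'I_k) (V : finType) (eG : rel V)
  (c : V -> R) : Prop :=
  (forall v, 0 <= c v <= 1) /\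
  (forall u : 'I_k -> V, FF_G eF eG u -> 1 <= \sum_(i < k) c (u i)).

Definition fcov_G (k : nat) (eF : rel 'I_k) (V : finType) (eG : rel V)
  : \bar R :=
  ereal_inf [set ((\sum_(v : V) c v)%:E) | c in is_fcov_G eF eG].

Definition fun_I0 (T : Type) : 'I_0 -> T :=
  fun i => False_rect T (match ltn_ord i in _ = b return (if b then False else True) with erefl => I end).

Definition fcons (T : Type) (k : nat) (x : T) (y : 'I_k -> T) : 'I_k.+1 -> T :=
  fun i => match unlift ord0 i with None => x | Some j => y j end.

Context {d : measure_display} {Omega : measurableType d}.

Fixpoint iint (nu : {measure set Omega -> \bar R}) (k : nat)
  : (('I_k -> Omega) -> \bar R) -> \bar R :=
  match k with
  | 0 => fun f => f (fun_I0 Omega)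
  | k'.+1 => fun f => (\int[nu]_x iint nu (fun y => f (fcons x y)))%E
  end.

Definition prod_measure_k (nu : {measure set Omega -> \bar R}) (k : nat)
  (S : set ('I_k -> Omega)) : \bar R :=
  iint nu (fun x => (\1_S x)%:E).

Definition atomless (nu : {measure set Omega -> \bar R}) : Prop :=
  forall A, measurable A -> (0 < nu A)%E ->
    exists B, [/\ measurable B, B `<=` A, (0 < nu B)%E & (nu B < nu A)%E].

Definition tensorF (k : nat) (eF : rel 'I_k) (W : Omega -> Omega -> R)
  (x : 'I_k -> Omega) : R :=
  \prod_(i < k) \prod_(j < k | (i < j)%N && eF i j) W (x i) (x j).

Definition FF_W (k : nat) (eF : rel 'I_k) (W : Omega -> Omega -> R)
  : set ('I_k -> Omega) := [set x | tensorF eF W x != 0].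

Definition is_fcov_W (nu : {measure set Omega -> \bar R}) (k : nat)
  (eF : rel 'I_k) (W : Omega -> Omega -> R) (c : Omega -> R) : Prop :=
  [/\ measurable_fun setT c,
      (forall x, 0 <= c x <= 1) &
      prod_measure_k nu (FF_W eF W `&` [set x | \sum_(i < k) c (x i) < 1])
        = 0%E].

Definition fcov_W (nu : {measure set Omega -> \bar R}) (k : nat)
  (eF : rel 'I_k) (W : Omega -> Omega -> R) : \bar R :=
  ereal_inf [set (\int[nu]_x (c x)%:E)%E | c in is_fcov_W nu eF W].

Definition graphon_rep (nu : {measure set Omega -> \bar R}) (V : finType)
  (eG : rel V) (P : V -> set Omega) (W : Omega -> Omega -> R) : Prop :=
  [/\ (forall v, measurable (P v)),
      (forall v, nu (P v) = (#|V|%:R^-1)%:E),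
      (forall u v, u != v -> P u `&` P v = set0),
      (forall x, exists v, P v x) &
      (forall u v x y, P u x -> P v y -> W x y = if eG u v then 1 else 0)].

End Defs.

(* Main.v *)
Require Import Defs.
From HB Require Import structures.
From mathcomp Require Import all_boot all_order all_algebra.
From mathcomp Require Import all_classical all_reals all_analysis.
From mathcomp Require Import ring lra measurable_realfun.
Import Order.TTheory GRing.Theory Num.Theory.
Local Open Scope classical_set_scope.
Local Open Scope ring_scope.
Lemma le_int0 (d : measure_display) (T : measurableType d) (R : realType)
  (mu : {measure set T -> \bar R}) (f g : T -> \bar R) :
  (forall x, (0 <= f x)%E) -> (forall x, (f x <= g x)%E) ->
  (\int[mu]_x f x <= \int[mu]_x g x)%E.
Proof.
move=> f0 fg.
rewrite !ge0_integralTE //; last by move=> x; exact: le_trans (f0 x) (fg x).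
apply: ereal_sup_le => _ [h /= hf <-]; exists h => //= x.
exact: le_trans (hf x) (fg x).
Qed.

Lemma iint_ge0 (R : realType) (d : measure_display) (Omega : measurableType d)
  (nu : {measure set Omega -> \bar R}) (k : nat) (f : ('I_k -> Omega) -> \bar R) :
  (forall x, (0 <= f x)%E) -> (0 <= iint nu f)%E.
Proof.
elim: k f => [|k IH] f f0 /=; first exact: f0.
apply: integral_ge0 => x _; apply: IH => y; exact: f0.
Qed.

Lemma iint_le (R : realType) (d : measure_display) (Omega : measurableType d)
  (nu : {measure set Omega -> \bar R}) (k : nat) (f g : ('I_k -> Omega) -> \bar R) :
  (forall x, (0 <= f x)%E) -> (forall x, (f x <= g x)%E) -> (iint nu f <= iint nu g)%E.
Proof.
elim: k f g => [|k IH] f g f0 fg /=; first exact: fg.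
apply: le_int0 => x; first by apply: iint_ge0 => y; exact: f0.
by apply: IH => y; [exact: f0|exact: fg].
Qed.

Lemma iint0 (R : realType) (d : measure_display) (Omega : measurableType d)
  (nu : {measure set Omega -> \bar R}) (k : nat) (f : ('I_k -> Omega) -> \bar R) :
  (forall x, f x = 0%E) -> iint nu f = 0%E.
Proof.
elim: k f => [|k IH] f f0 /=; first exact: f0.
rewrite (_ : (fun x => _) = cst 0%E) ?integral0 //.
by apply: funext => x; apply: IH => y; exact: f0.
Qed.

Lemma fcons0 (T : Type) (k : nat) (x : T) (y : 'I_k -> T) : fcons x y ord0 = x.
Proof. by rewrite /fcons unlift_none. Qed.

Lemma fconsS (T : Type) (k : nat) (x : T) (y : 'I_k -> T) j :
  fcons x y (lift ord0 j) = y j.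
Proof. by rewrite /fcons liftK. Qed.

Definition Bset {R : realType} {T : Type} {k : nat} (Q : 'I_k -> set T)
  (c : T -> R) (t : R) : set ('I_k -> T) :=
  [set x | (forall i, Q i (x i)) /\ \sum_(i < k) c (x i) < t].

Lemma fin_bounds (R : realType) (e : \bar R) (r : R) :
  (0 <= e)%E -> (e <= r%:E)%E -> e = (fine e)%:E.
Proof. by case: e. Qed.

Lemma int_bounds (R : realType) (d : measure_display) (Omega : measurableType d)
  (nu : {measure set Omega -> \bar R}) (A : set Omega) (c : Omega -> R) :
  measurable A -> measurable_fun setT c -> (forall x, 0 <= c x <= 1) ->
  (0 <= \int[nu]_(x in A) (c x)%:E)%E /\ (\int[nu]_(x in A) (c x)%:E <= nu A)%E.
Proof.
move=> mA mc c01; split.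
  by apply: integral_ge0 => x _; rewrite lee_fin; case/andP: (c01 x).
rewrite -[nu A]mul1e -integral_cst //; apply: ge0_le_integral => //.
- by move=> x _; rewrite lee_fin; case/andP: (c01 x).
- apply/measurable_EFinP; exact: measurable_funS mc.
- by move=> x _; rewrite /= lee_fin; case/andP: (c01 x).
Qed.

Lemma core (R : realType) (d : measure_display) (Omega : measurableType d)
  (nu : {measure set Omega -> \bar R}) (k : nat) (Q : 'I_k -> set Omega)
  (c : Omega -> R) (q t : R) :
  (forall i, measurable (Q i)) -> (forall i, nu (Q i) = q%:E) -> 0 < q ->
  measurable_fun setT c -> (forall x, 0 <= c x <= 1) ->
  iint nu (fun x => (\1_(Bset Q c t) x)%:E) = 0%E ->
  t * q <= \sum_(i < k) fine (\int[nu]_(x in Q i) (c x)%:E).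
Proof.
move=> mQ nuQ q0 mc c01; elim: k Q t mQ nuQ => [|k IH] Q t mQ nuQ /=.
  rewrite big_ord0 indicE => H.
  have Ht : ~ (0 < t).
    move=> t0; move: H; rewrite mem_set //; last first.
      by split => [[]//|]; rewrite big_ord0.
    by move=> /eqP; rewrite eqe oner_eq0.
  by rewrite pmulr_lle0 //; rewrite leNgt; apply/negP.
pose Q' := fun j : 'I_k => Q (lift ord0 j).
pose G := fun s => iint nu (fun y => (\1_(Bset Q' c s) y)%:E).
have G0 s : (0 <= G s)%E by apply: iint_ge0 => y; rewrite lee_fin.
have Gnd s1 s2 : s1 <= s2 -> (G s1 <= G s2)%E.
  move=> s12; apply: iint_le => y; first by rewrite lee_fin.
  rewrite !indicE lee_fin; case: (boolP (y \in _)) => //= /set_mem [H1 H2].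
  by rewrite mem_set //; split => //; exact: lt_le_trans H2 s12.
have Hrew x0 : iint nu (fun y => (\1_(Bset Q c t) (fcons x0 y))%:E)
    = ((fun x0 => G (t - c x0)) \_ (Q ord0)) x0.
  rewrite patchE; case: ifPn => [/set_mem Q0x | /negP nQ0].
    congr iint; apply: funext => y; congr EFin; rewrite !indicE.
    suff -> : (fcons x0 y \in Bset Q c t) = (y \in Bset Q' c (t - c x0)) by []. 
    apply/idP/idP => /set_mem [H1 H2]; apply/mem_set; split.
    - by move=> j; have := H1 (lift ord0 j); rewrite fconsS.
    - move: H2; rewrite big_ord_recl fcons0.
      under eq_bigr do rewrite fconsS.
      move=> H2; lra.
    - move=> i; case: (unliftP ord0 i) => [j ->|->]; first by rewrite fconsS; exact: H1.
      by rewrite fcons0.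
    - rewrite big_ord_recl fcons0.
      under eq_bigr do rewrite fconsS.
      lra.
  apply: iint0 => y; rewrite indicE memNset //= => -[H1 _].
  by apply: nQ0; apply/mem_set; have := H1 ord0; rewrite fcons0.
move=> H; rewrite (_ : (fun x => _) = (fun x0 => G (t - c x0)) \_ (Q ord0)) in H;
  last by apply: funext => x; exact: Hrew.
rewrite big_ord_recl; set S := \sum_(i < k) _.
have IHG s : G s = 0%E -> s * q <= S.
  by move=> Gs; apply: IH; [move=> j; exact: mQ | move=> j; exact: nuQ | exact: Gs].

have [I0ge0 I0le] := @int_bounds R d Omega nu (Q ord0) c (mQ ord0) mc c01.
set I0 := (\int[nu]_(x in Q ord0) (c x)%:E)%E in I0ge0 I0le *.
rewrite nuQ in I0le.
apply/ler_addgt0Pr => e e0.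
pose t0 := (S + e) / q.
pose m := t - t0.
have Gt0 : (0 < G t0)%E.
  rewrite lt0e G0 andbT; apply/eqP => /IHG.
  rewrite /t0 divfK ?gt_eqF //; lra.
pose A := [set x | m <= c x].
have mA : measurable A.
  have := measurable_fun_le measurableT (measurable_cst m) mc.
  by rewrite setTI.
pose E := Q ord0 `\` A.
have mE : measurable E by apply: measurableD.
have nuE : nu E = 0%E.
  have : (G t0 * nu E <= 0)%E.
    rewrite -integral_cst // integral_mkcond -H.
    apply: le_int0 => x.
      by rewrite patchE; case: ifPn => _ //; exact: ltW.
    rewrite !patchE; case: ifPn => [/set_mem [Q0x Ax] | _].
      rewrite mem_set //; apply: Gnd.
      move/negP: Ax; rewrite /A /= -ltNge /m => Ax; lra.
    by case: ifPn => _ //.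
  apply: contraTeq => nE0; rewrite -ltNge; apply: mule_gt0 => //.
  by rewrite lt0e nE0 measure_ge0.
have mcQ : measurable_fun (Q ord0) (EFin \o c).
  apply/measurable_EFinP; exact: (measurable_funS measurableT (@subsetT _ _) mc).
have c0 x : (0 <= (c x)%:E)%E by rewrite lee_fin; case/andP: (c01 x).
have [m0|m0] := leP 0 m; last first.
  have : 0 <= fine I0 by apply: fine_ge0.
  have : m * q < 0 by rewrite pmulr_llt0.
  rewrite /m /t0 mulrBl divfK ?gt_eqF //; lra.
have HmI : ((m * q)%:E <= I0)%E.
  rewrite EFinM -(nuQ ord0) -integral_cst //.
  rewrite (ge0_negligible_integral mE (mQ ord0) (measurable_cst _) _ nuE); last first.
    by move=> x _; rewrite lee_fin.
  rewrite /I0 (ge0_negligible_integral mE (mQ ord0) mcQ _ nuE); last first.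
    by move=> x _; exact: c0.
  apply: (ge0_le_integral nu (measurableD (mQ ord0) mE)).
  - by move=> x _; rewrite lee_fin.
  - exact: measurable_cst.
  - exact: (measurable_funS (mQ ord0) (fun x => @proj1 _ _) mcQ).
  - move=> x [Q0x nEx] /=; rewrite lee_fin.
    by apply: contra_notT nEx; rewrite -ltNge => cm; split => //; rewrite /A /=; apply/negP; rewrite -ltNge.
have : m * q <= fine I0.
  by rewrite -lee_fin -(@fin_bounds R I0 q I0ge0 I0le).
rewrite /m /t0 mulrBl divfK ?gt_eqF //; lra.
Qed.

Lemma part_int (R : realType) (d : measure_display) (Omega : measurableType d)
  (nu : {measure set Omega -> \bar R}) (V : finType) (P : V -> set Omega)
  (f : Omega -> R) :
  (forall v, measurable (P v)) -> (forall u v, u != v -> P u `&` P v = set0) ->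
  (forall x, exists v, P v x) -> measurable_fun setT f ->
  (\int[nu]_x (f x)%:E = \sum_(v : V) \int[nu]_(x in P v) (f x)%:E)%E.
Proof.
move=> mP disjP covP mf.
have DT : \big[setU/set0]_(v <- index_enum V) P v = setT.
  rewrite -bigcup_seq; apply/seteqP; split => // x _.
  have [v Pv] := covP x; exists v => //=; exact: mem_index_enum.
have tP : trivIset [set` index_enum V] P.
  by apply/trivIsetP => u v _ _; exact: disjP.
have H := @integral_bigsetU_EFin d Omega R nu V P f (index_enum V) mP
  (index_enum_uniq V) tP.
rewrite /= DT in H; apply: H.
by apply/measurable_EFinP.
Qed.

Lemma tensor_edge (R : realType) (d : measure_display) (Omega : measurableType d)
  (k : nat) (eF : rel 'I_k) (W : Omega -> Omega -> R) (x : 'I_k -> Omega) i j :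
  tensorF eF W x != 0 -> eF i j -> (i < j)%N -> W (x i) (x j) != 0.
Proof.
move=> Hne eij ltij; apply: contraNneq Hne => W0.
rewrite /tensorF (bigD1 i) //= (bigD1 j) /=; last by rewrite ltij eij.
by rewrite W0 !mul0r.
Qed.

Theorem proposition3p13 (R : realType) (d : measure_display)
  (Omega : measurableType d) (nu : probability Omega R)
  (Hatomless : atomless nu)
  (k : nat) (eF : rel 'I_k) (HF : simple_graph eF)
  (V : finType) (eG : rel V) (HG : simple_graph eG)
  (P : V -> set Omega) (WG : Omega -> Omega -> R)
  (HWG : graphon_rep nu eG P WG) :
  fcov_G R eF eG = ((#|V|%:R : R)%:E * fcov_W nu eF WG)%E.
Proof.
move: HWG => [mP nuP disjP covP WP].
case: HF => eFsym eFirr; case: HG => eGsym eGirr.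
set N : R := #|V|%:R.
have [x0 _] : [set: Omega] !=set0.
  apply/set0P; apply/eqP => H0; have := probability_setT nu.
  by rewrite H0 measure0 => /(congr1 fine) /= /esym /eqP; rewrite oner_eq0.
have N0 : 0 < N.
  rewrite /N ltr0n; apply/card_gt0P; have [v _] := covP x0; by exists v.
have NV : N != 0 by rewrite gt_eqF.
have Wuv u v x y : P u x -> P v y -> WG x y = (if eG u v then 1 else 0).
  by move=> Pux Pvy; apply: WP.
apply/eqP; rewrite eq_le; apply/andP; split.
-
  suff H : ((N^-1)%:E * fcov_G R eF eG <= fcov_W nu eF WG)%E.
    have -> : fcov_G R eF eG = (N%:E * ((N^-1)%:E * fcov_G R eF eG))%E.
      by rewrite muleA -EFinM mulfV // mul1e.
    by apply: lee_wpmul2l => //; rewrite lee_fin ltW.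
  apply/ereal_infP => _ [c [mc c01 bad0] <-].
  pose I v := (\int[nu]_(x in P v) (c x)%:E)%E.
  have Ib v : (0 <= I v)%E /\ (I v <= (N^-1)%:E)%E.
    by rewrite -(nuP v); apply: int_bounds.
  have IE v : I v = (fine (I v))%:E by have [h0 h1] := Ib v; exact: (@fin_bounds R _ _ h0 h1).
  pose c' v := N * fine (I v).
  have c'cov : is_fcov_G eF eG c'.
    split.
      move=> v; have [I0 I1] := Ib v; rewrite /c'.
      have f0 : 0 <= fine (I v) by apply: fine_ge0.
      have f1 : fine (I v) <= N^-1 by rewrite -lee_fin -IE.
      apply/andP; split; first by rewrite mulr_ge0 // ltW.
      by rewrite -(mulfV NV) ler_wpM2l // ltW.
    move=> u Hu.
    pose Q i := P (u i).
    have B0 : iint nu (fun x => (\1_(Bset Q c 1) x)%:E) = 0%E.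
      apply/eqP; rewrite eq_le iint_ge0 ?andbT; last by move=> x; rewrite lee_fin.
      rewrite -bad0 /prod_measure_k; apply: iint_le => x; first by rewrite lee_fin.
      rewrite !indicE lee_fin; case: (boolP (x \in Bset Q c 1)) => //= /set_mem [HQ Hs].
      rewrite mem_set //; split => //.
      rewrite /FF_W /= /tensorF big1 ?oner_eq0 // => i _.
      rewrite big1 // => j /andP [_ eij].
      by rewrite (Wuv (u i) (u j)) ?(Hu _ _ eij) //; [exact: HQ|exact: HQ].
    have := @core R d Omega nu k Q c N^-1 1 (fun i => mP (u i)) (fun i => nuP (u i))
      (ltac:(by rewrite invr_gt0)) mc c01 B0.
    rewrite mul1r /c' -mulr_sumr => H.
    by rewrite -(mulfV NV) ler_wpM2l // ltW.
  have H1 : (fcov_G R eF eG <= (\sum_(v : V) c' v)%:E)%E.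
    by apply: ereal_inf_lbound; exists c'.
  have H2 : (\int[nu]_x (c x)%:E = (\sum_(v : V) fine (I v))%:E)%E.
    rewrite (@part_int R d Omega nu V P c mP disjP covP mc) -sumEFin.
    by apply: eq_bigr => v _; rewrite -IE.
  rewrite H2; apply: (le_trans (lee_wpmul2l _ H1)); first by rewrite lee_fin invr_ge0 ltW.
  by rewrite -EFinM /c' -mulr_sumr mulKf.
-
  apply/ereal_infP => _ [c [c01 cov] <-].
  pose ct x := \sum_(v : V) c v * \1_(P v) x.
  have ctE v x : P v x -> ct x = c v.
    move=> Pvx; rewrite /ct (bigD1 v) //= indicE mem_set // mulr1 big1 ?addr0 // => w wv.
    rewrite indicE memNset ?mulr0 // => Pwx.
    have : (P w `&` P v) x by split.
    by rewrite disjP.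
  have mct : measurable_fun setT ct.
    apply: measurable_sum => v; apply: measurable_funM => //; exact: measurable_indic.
  have ct01 x : 0 <= ct x <= 1 by have [v Pv] := covP x; rewrite (ctE v x Pv) c01.
  have ctcov : is_fcov_W nu eF WG ct.
    split => //.
    rewrite /prod_measure_k; apply: iint0 => x; rewrite indicE memNset // => -[HFx Hs].
    have [u Hu] := @boolp.choice _ _ (fun i v => P v (x i)) (fun i => covP (x i)).
    have uF : FF_G eF eG u.
      have key i j : eF i j -> (i < j)%N -> eG (u i) (u j).
        move=> eij ltij; have := @tensor_edge R d Omega k eF WG x i j HFx eij ltij.
        by rewrite (Wuv (u i) (u j)) ?Hu //; case: (eG _ _); rewrite ?eqxx.
      move=> i j eij; case: (ltngtP i j) => [lt|gt|eq].
      - exact: key.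
      - by rewrite eGsym; apply: key => //; rewrite eFsym.
      - have eqij : i = j by apply: val_inj.
        by rewrite eqij (negbTE (eFirr j)) in eij.
    have := cov u uF.
    rewrite (eq_bigr (fun i => ct (x i))) => [H|i _]; last by rewrite (ctE (u i) (x i) (Hu i)).
    by move: H; rewrite leNgt Hs.
  have Hint : (\int[nu]_x (ct x)%:E = ((\sum_(v : V) c v) * N^-1)%:E)%E.
    rewrite (@part_int R d Omega nu V P ct mP disjP covP mct) mulr_suml -sumEFin.
    apply: eq_bigr => v _.
    rewrite (eq_integral (fun _ => (c v)%:E)); last first.
      by move=> x /set_mem Pvx; rewrite (ctE v x Pvx).
    by rewrite integral_cst // nuP -EFinM.
  have Hle : (fcov_W nu eF WG <= ((\sum_(v : V) c v) * N^-1)%:E)%E.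
    by rewrite -Hint; apply: ereal_inf_lbound; exists ct.
  apply: (le_trans (lee_wpmul2l _ Hle)); first by rewrite lee_fin ltW.
  by rewrite -EFinM mulrCA mulfV // mulr1.
Qed.
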